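(* Let $(E,\mathscr{T},\le)$ be a $T_2$-preordered Tychonoff space such that the quotient $(E/\!\sim,\mathscr{T}/\!\sim,\lesssim)$ is a completely regularly ordered space. Then the preorder $\le$ is represented by the continuous isotone functions on $E$, i.e. $G(\le)=\bigcap_{f\in\mathcal{F}}G_f$ with $\mathcal{F}$ the family of continuous isotone $f:E\to[0,1]$. Let $\beta:E\to(\beta E,\mathscr{T}_\beta,\le_\beta)$ be the Stone–Čech compactification with the preorder $G(\le_\beta)=\bigcap_{f\in\mathcal{F}}G_{\tilde f}$, $\tilde f$ the unique continuous extension of $f\circ\beta^{-1}$ to $\beta E$; let $\sim_\beta$ be the equivalence ($x\le_\beta y$ and $y\le_\beta x$) and $\Pi:\beta E\to\beta E/\!\sim_\beta$ the quotient projection onto the $T_2$-ordered space $(\beta E/\!\sim_\beta,\mathscr{T}_\beta/\!\sim_\beta,\lesssim_\beta)$, and $\pi:E\to E/\!\sim$ the quotient projection. Then $\varphi:=\Pi\circ\beta\circ\pi^{-1}:E/\!\sim\,\to\beta E/\!\sim_\beta$ is a well-defined map, it is a $T_2$-order compactification of $E/\!\sim$ equivalent to the Nachbin $T_2$-order compactification $n:E/\!\sim\,\to n(E/\!\sim)$, and $\varphi\circ\pi=\Pi\circ\beta$.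
   Context: A topological preordered space $(E,\mathscr{T},\le)$ is $T_2$-preordered if $G(\le)=\{(x,y):x\le y\}$ is closed in $E\times E$; $T_2$-ordered if moreover $\le$ is antisymmetric. Isotone: $x\le y\Rightarrow f(x)\le f(y)$; $G_f=\{(x,y):f(x)\le f(y)\}$. For a preorder $\le$, $x\sim y$ means $x\le y$ and $y\le x$; $E/\!\sim$ carries the quotient topology and the order $[x]\lesssim[y]$ iff $x\le y$. A topological ordered space is completely regularly ordered if its topology is the initial topology of its continuous isotone functions into $[0,1]$ and $x\le y$ iff $f(x)\le f(y)$ for all such $f$. A preorder embedding is a continuous isotone injective map which is a homeomorphism onto its image with isotone inverse (image with induced preorder); a ($T_2$-order) compactification of an ordered space $X$ is a preorder embedding with dense image into a compact Hausdorff $T_2$-ordered space. $c_1\le c_2$ means there is a continuous isotone $C:c_2X\to c_1X$ with $C\circ c_2=c_1$; equivalent means both $c_1\le c_2$ and $c_2\le c_1$. The Nachbin $T_2$-order compactification of a completely regularly ordered space $X$ is the (unique up to equivalence) $T_2$-order compactification $n:X\to nX$ such that every continuous isotone function $X\to[0,1]$ extends to a continuous isotone function on $nX$. *)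

(* Defs.v *)
From HB Require Import structures.
From mathcomp Require Import all_boot all_order all_algebra generic_quotient.
From mathcomp Require Import all_classical all_reals topology.
Set Implicit Arguments. Unset Strict Implicit. Unset Printing Implicit Defensive.
Import Order.TTheory GRing.Theory Num.Theory numFieldTopology.Exports.
Local Open Scope classical_set_scope.
Local Open Scope ring_scope.

Record preorder (T : Type) := Preorder {
  ple :> T -> T -> Prop;
  ple_refl : forall x, ple x x;
  ple_trans : forall x y z, ple x y -> ple y z -> ple x z }.

Section Quot.
Context {T : choiceType} (P : preorder T).

Definition peqv : rel T := fun x y => `[< P x y /\ P y x >].

Lemma peqv_refl : reflexive peqv.
Proof. by move=> x; apply/asboolP; split; apply: ple_refl. Qed.

Lemma peqv_sym : symmetric peqv.
Proof.
by move=> x y; apply/asboolP/asboolP => -[h1 h2]; split.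
Qed.

Lemma peqv_trans : transitive peqv.
Proof.
move=> y x z /asboolP[h1 h2] /asboolP[h3 h4]; apply/asboolP.
by split; apply: ple_trans; eauto.
Qed.

Canonical peqv_equiv := EquivRel peqv peqv_refl peqv_sym peqv_trans.
End Quot.

Notation pquot P := (quotient_topology {eq_quot (peqv P)}%qT).

Definition qproj {T : topologicalType} (P : preorder T) : T -> pquot P :=
  fun x => (\pi_(pquot P) x)%qT.

Definition qle {T : topologicalType} (P : preorder T) (a b : pquot P) : Prop :=
  P (repr a) (repr b).

Section Defs.
Context (R : realType).

Definition isotone {X Y : Type} (leX : X -> X -> Prop) (leY : Y -> Y -> Prop)
  (f : X -> Y) := forall x y, leX x y -> leY (f x) (f y).

Definition cont_iso01 {X : topologicalType} (leX : X -> X -> Prop) (f : X -> R) :=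
  continuous f /\ (forall x, 0 <= f x <= 1) /\ isotone leX (fun a b : R => a <= b) f.

Definition T2_preordered {X : topologicalType} (leX : X -> X -> Prop) :=
  closed [set p : X * X | leX p.1 p.2].

Definition T2_ordered {X : topologicalType} (leX : X -> X -> Prop) :=
  [/\ (forall x, leX x x), (forall x y z, leX x y -> leX y z -> leX x z),
      (forall x y, leX x y -> leX y x -> x = y) & T2_preordered leX].

Definition completely_regular (X : topologicalType) :=
  forall (A : set X) (x : X), closed A -> ~ A x ->
    exists f : X -> R, [/\ continuous f, (forall y, 0 <= f y <= 1),
                           f x = 0 & (forall y, A y -> f y = 1)].

Definition tychonoff_space (X : topologicalType) :=
  completely_regular X /\ hausdorff_space X.

(* completely regularly ordered: the topology is the initial topology of the
   continuous isotone functions into [0,1] (every neighbourhood of a point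
   contains a finite intersection of preimages of open sets by such
   functions), and x <= y iff f x <= f y for all such f. *)
Definition completely_regularly_ordered {X : topologicalType}
    (leX : X -> X -> Prop) :=
  (forall (U : set X) (x : X), open U -> U x ->
     exists n (f : 'I_n -> X -> R) (V : 'I_n -> set R),
       (forall i, [/\ cont_iso01 leX (f i), open (V i) & V i (f i x)]) /\
       \bigcap_(i in [set: 'I_n]) (f i @^-1` V i) `<=` U) /\
  (forall x y, leX x y <-> (forall f, cont_iso01 leX f -> f x <= f y)).

Definition embedding_onto_image {X Y : topologicalType} (f : X -> Y) :=
  forall U : set X, open U -> exists V : set Y, open V /\ f @` U = range f `&` V.

Definition preorder_embedding {X Y : topologicalType}
    (leX : X -> X -> Prop) (leY : Y -> Y -> Prop) (f : X -> Y) :=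
  [/\ continuous f, isotone leX leY f, injective f, embedding_onto_image f
    & (forall x y, leY (f x) (f y) -> leX x y)].

Definition T2_order_compactification {X Y : topologicalType}
    (leX : X -> X -> Prop) (leY : Y -> Y -> Prop) (c : X -> Y) :=
  [/\ preorder_embedding leX leY c, dense (range c), compact [set: Y],
      hausdorff_space Y & T2_ordered leY].

Definition compactification_le {X Y1 Y2 : topologicalType}
    (leY1 : Y1 -> Y1 -> Prop) (leY2 : Y2 -> Y2 -> Prop)
    (c1 : X -> Y1) (c2 : X -> Y2) :=
  exists C : Y2 -> Y1, [/\ continuous C, isotone leY2 leY1 C & C \o c2 = c1].

Definition compactification_equiv {X Y1 Y2 : topologicalType}
    (leY1 : Y1 -> Y1 -> Prop) (leY2 : Y2 -> Y2 -> Prop)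
    (c1 : X -> Y1) (c2 : X -> Y2) :=
  compactification_le leY1 leY2 c1 c2 /\ compactification_le leY2 leY1 c2 c1.

Definition nachbin_compactification {X Y : topologicalType}
    (leX : X -> X -> Prop) (leY : Y -> Y -> Prop) (n : X -> Y) :=
  T2_order_compactification leX leY n /\
  (forall f : X -> R, cont_iso01 leX f ->
     exists g : Y -> R, cont_iso01 leY g /\ g \o n = f).

(* Stone-Cech compactification of a Tychonoff space E (characterized up to
   homeomorphism by: compact Hausdorff, dense embedding, and every continuous
   E -> [0,1] extends continuously). *)
Definition stone_cech {E B : topologicalType} (b : E -> B) :=
  [/\ [/\ continuous b, injective b & embedding_onto_image b], dense (range b),
      compact [set: B], hausdorff_space B &
      (forall f : E -> R, continuous f -> (forall x, 0 <= f x <= 1) ->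
         exists g : B -> R, continuous g /\ g \o b = f)].

Definition beta_le {E B : topologicalType} (leE : E -> E -> Prop) (b : E -> B)
    (x y : B) : Prop :=
  forall f : E -> R, cont_iso01 leE f ->
    forall g : B -> R, continuous g -> g \o b = f -> g x <= g y.

Lemma beta_le_refl {E B : topologicalType} (leE : E -> E -> Prop) (b : E -> B) x :
  beta_le leE b x x.
Proof. by move=> f _ g _ _; exact: lexx. Qed.

Lemma beta_le_trans {E B : topologicalType} (leE : E -> E -> Prop) (b : E -> B)
  x y z : beta_le leE b x y -> beta_le leE b y z -> beta_le leE b x z.
Proof.
move=> h1 h2 f hf g hg hgb; exact: le_trans (h1 f hf g hg hgb) (h2 f hf g hg hgb).
Qed.

Definition beta_pre {E B : topologicalType} (leE : E -> E -> Prop) (b : E -> B) :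
  preorder B := Preorder (@beta_le_refl E B leE b) (@beta_le_trans E B leE b).

End Defs.

(* Main.v *)
Require Import Defs.
From HB Require Import structures.
From mathcomp Require Import all_boot all_order all_algebra generic_quotient.
From mathcomp Require Import all_classical all_reals topology.
From mathcomp Require Import normedtype.
From mathcomp Require Import zify ring lra.
Import Order.TTheory GRing.Theory Num.Theory numFieldTopology.Exports.
Import numFieldNormedType.Exports.
Local Open Scope classical_set_scope.
Local Open Scope ring_scope.

Lemma nbhs_pre (Y Z : topologicalType) (f : Y -> Z) (A : set Z) x :
  continuous f -> open A -> A (f x) -> nbhs x (f @^-1` A).
Proof. by move=> fc oA Afx; apply: fc; apply: open_nbhs_nbhs. Qed.

Section R.
Variable R : realType.

Lemma near_ne (Y Z : topologicalType) (u : Y -> R) (v : Z -> R) y z :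
  continuous u -> continuous v -> v z != u y ->
  \forall z' \near z & y' \near y, v z' != u y'.
Proof.
move=> uc vc vu.
have := @Rhausdorff R; rewrite open_hausdorff => /(_ _ _ vu) [[A B]] /=.
rewrite !inE => -[Av Bu] [oA oB /eqP AB0].
exists (v @^-1` A, u @^-1` B) => /=.
  by split; apply: nbhs_pre.
case=> z' y' /= [Az' By']; apply/eqP => e.
have : (A `&` B) (v z') by split => //; rewrite e.
by move/eqP: AB0 => ->.
Qed.
Arguments near_ne {Y Z u v y z}.

Lemma dense_nbhs (Y : topologicalType) (S A : set Y) y :
  dense S -> nbhs (y : Y) A -> exists2 x, S x & A x.
Proof.
move=> dS; rewrite nbhsE => -[B [oB By] BA].
have [x [Bx Sx]] := dS B (ex_intro _ y By) oB.
by exists x => //; apply: BA.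
Qed.
Arguments dense_nbhs {Y S A y}.

Lemma near_cover (Z Y : topologicalType) (I : Type) (u : I -> Y -> R)
    (v : I -> Z -> R) (K : set Z) y :
  compact K -> (forall i, continuous (u i)) -> (forall i, continuous (v i)) ->
  (forall z, K z -> exists i, v i z != u i y) ->
  \forall y' \near y, forall z, K z -> exists i, v i z != u i y'.
Proof.
move=> cK uc vc H.
have := (iffLR (compact_near_coveringP K) cK) Y (nbhs y)
  (fun y' z => exists i, v i z != u i y') _.
apply.
move=> z /H [i ne]; apply: filterS (near_ne (uc i) (vc i) ne).
by case=> z' y' /= h; exists i.
Qed.
Arguments near_cover {Z Y I u v K y}.

Lemma build_map (W : Type) (Y Z : topologicalType) (I : Type)
    (u : I -> Y -> R) (v : I -> Z -> R) (c : W -> Y) (d : W -> Z) :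
  compact [set: Z] -> (forall i, continuous (u i)) ->
  (forall i, continuous (v i)) ->
  (forall z z', (forall i, v i z = v i z') -> z = z') -> dense (range c) ->
  (forall i w, u i (c w) = v i (d w)) ->
  exists C : Y -> Z, [/\ continuous C, (forall i y, v i (C y) = u i y)
                       & (forall w, C (c w) = d w)].
Proof.
move=> cZ uc vc sep dc ucd.
have ex : forall y, exists z, forall i, v i z = u i y.
  move=> y; apply: contrapT => /forallNP H.
  have := near_cover cZ uc vc.
  have H' : forall z, setT z -> exists i, v i z != u i y.
    move=> z _; have /existsNP [i ne] := H z; exists i; exact/eqP.
  move=> /(_ y H') /(dense_nbhs dc) [_ [w _ <-]] /(_ (d w) Logic.I) [i].
  by rewrite ucd eqxx.
have [C HC] := choice ex.
have Ccd : forall w, C (c w) = d w.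
  by move=> w; apply: sep => i; rewrite HC ucd.
exists C; split => //.
move=> y A /=; rewrite nbhsE => -[B [oB By] BA].
have cK : compact (~` B).
  exact: (subclosed_compact (open_closedC oB) cZ).
have H : forall z, (~` B) z -> exists i, v i z != u i y.
  move=> z nBz; apply: contrapT => /forallNP H.
  apply: nBz; suff -> : z = C y by [].
  by apply: sep => i; rewrite HC; apply/eqP/negPn/negP; exact: H.
suff : \forall y' \near y, A (C y') by [].
apply: filterS (near_cover cK uc vc H) => y' H' /=.
apply: BA; apply: contrapT => /H' [i]; by rewrite HC eqxx.
Qed.
End R.


Lemma up_closed_gen (Y : topologicalType) (r : Y -> Y -> Prop) (K : set Y) :
  compact [set: Y] -> closed [set p : Y * Y | r p.1 p.2] -> closed K ->
  closed [set x | exists2 k, K k & r k x].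
Proof.
move=> cY gc cK; rewrite -[X in closed X]setCK; apply: open_closedC.
rewrite openE => x /= nx.
have cpK : compact K := subclosed_compact cK cY (@subsetT _ K).
have := (iffLR (compact_near_coveringP K) cpK) Y (nbhs x) (fun x' k => ~ r k x') _.
have H : forall k, K k -> \forall k' \near k & x' \near x, ~ r k' x'.
  move=> k Kk; have := closed_openC gc; rewrite openE => /(_ (k, x)) H.
  have /H Hn : ~ r k x by move=> h; apply: nx; exists k.
  by apply: filterS Hn; case.
move=> /(_ _ H) Hx; apply: filterS Hx => x' H' [k Kk rk].
exact: H' k Kk rk.
Qed.

Lemma flip_closed (Y : topologicalType) (r : Y -> Y -> Prop) :
  closed [set p : Y * Y | r p.1 p.2] -> closed [set p : Y * Y | r p.2 p.1].
Proof.
move=> gc.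
have -> : [set p : Y * Y | r p.2 p.1] = unstable.swap @^-1` [set p | r p.1 p.2].
  by rewrite predeqE => -[].
by apply: preimage_closed => // p _; exact: swap_continuous.
Qed.

Definition decr {Y : Type} (le : Y -> Y -> Prop) (S : set Y) :=
  forall x y, le x y -> S y -> S x.

Section Ordered.
Variables (Y : topologicalType) (le : Y -> Y -> Prop).
Hypotheses (cY : compact [set: Y]) (hY : hausdorff_space Y) (oY : T2_ordered le).

Let le_refl : forall x, le x x. Proof. by case: oY. Qed.
Let le_trans : forall x y z, le x y -> le y z -> le x z. Proof. by case: oY. Qed.
Let gc : closed [set p : Y * Y | le p.1 p.2]. Proof. by case: oY. Qed.

Local Notation decr := (decr le).

Lemma up_closed K : closed K -> closed [set x | exists2 k, K k & le k x].
Proof. exact: up_closed_gen. Qed.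

Lemma down_closed K : closed K -> closed [set x | exists2 k, K k & le x k].
Proof. by move=> cK; have := @up_closed_gen Y (fun a b => le b a) K cY (@flip_closed Y le gc) cK. Qed.

Lemma interp (A W : set Y) : closed A -> decr A -> open W -> decr W ->
  A `<=` W -> exists V D : set Y,
   [/\ open V /\ decr V, closed D /\ decr D, A `<=` V, V `<=` D & D `<=` W].
Proof.
move=> cA dA oW dW AW.
have nY := compact_normal hY cY.
have : set_nbhs A W.
  by move=> x Ax; apply: open_nbhs_nbhs; split => //; apply: AW.
move=> /(nY A cA) [O AO clOW].
have AOi : A `<=` O°.
  by move=> a Aa; exact: AO a Aa.
exists (~` [set x | exists2 k, (~` O°) k & le k x]).
exists [set x | exists2 c, closure O c & le x c].
split.
- split.
    by apply: closed_openC; apply: up_closed; apply: open_closedC; exact: open_interior.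
  by move=> x y lexy ny [k nk lekx]; apply: ny; exists k => //; exact: le_trans lekx lexy.
- by split; [apply: down_closed; exact: closed_closure|move=> x y lexy [c Oc leyc]; exists c => //; exact: le_trans lexy leyc].
- move=> a Aa [k nk leka]; apply: nk; apply: AOi; exact: dA leka Aa.
- move=> x nx; exists x; last exact: le_refl.
  apply: subset_closure; apply: interior_subset.
  by apply: contrapT => h; apply: nx; exists x => //; exact: le_refl.
- move=> x [c Oc lexc]; apply: dW lexc _; exact: clOW.
Qed.

End Ordered.

Section Urysohn.
Variables (R : realType) (Y : topologicalType) (le : Y -> Y -> Prop).
Hypotheses (cY : compact [set: Y]) (hY : hausdorff_space Y) (oY : T2_ordered le).
Variables (A W : set Y).
Hypotheses (cA : closed A) (dA : decr le A) (oW : open W) (dW : decr le W)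
  (AW : A `<=` W).

Let le_refl : forall x, le x x. Proof. by case: oY. Qed.
Let le_trans : forall x y z, le x y -> le y z -> le x z. Proof. by case: oY. Qed.

Definition ispec (K O V D : set Y) :=
  [/\ open V /\ decr le V, closed D /\ decr le D, K `<=` V, V `<=` D & D `<=` O].
Definition ihyp (K O : set Y) :=
  [/\ closed K, decr le K, open O, decr le O & K `<=` O].

Lemma ex_ip (KO : set Y * set Y) : exists VD : set Y * set Y,
  ihyp KO.1 KO.2 -> ispec KO.1 KO.2 VD.1 VD.2.
Proof.
case: (pselect (ihyp KO.1 KO.2)) => [[cK dK oO dO KO']|nh]; last first.
  by exists (set0, set0).
have [V [D [[oV dV] [cD dD] KV VD DO]]] := @interp _ _ cY hY oY _ _ cK dK oO dO KO'.
by exists (V, D).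
Qed.

Definition ip := projT1 (choice ex_ip).
Lemma ipP K O : ihyp K O -> ispec K O (ip (K, O)).1 (ip (K, O)).2.
Proof. by move=> h; exact: (projT2 (choice ex_ip) (K, O) h). Qed.
Arguments ipP {K O}.

Fixpoint lev n : (nat -> set Y) * (nat -> set Y) :=
  match n with
  | 0 => (fun k => if k == 0%N then (ip (A, W)).1 else W, fun _ => (ip (A, W)).2)
  | n'.+1 => let L := lev n' in
    (fun j => if odd j then (ip (L.2 j./2, L.1 j./2.+1)).1 else L.1 j./2,
     fun j => if odd j then (ip (L.2 j./2, L.1 j./2.+1)).2 else L.2 j./2)
  end.
Definition O n := (lev n).1.
Definition K n := (lev n).2.

Lemma O_S n j : O n.+1 j =
  if odd j then (ip (K n j./2, O n j./2.+1)).1 else O n j./2.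
Proof. by []. Qed.
Lemma K_S n j : K n.+1 j =
  if odd j then (ip (K n j./2, O n j./2.+1)).2 else K n j./2.
Proof. by []. Qed.

Lemma O_n0 n : O n 0 = O 0 0.
Proof. by elim: n => // n IH; rewrite O_S /=. Qed.

Lemma inv n : [/\ forall k, (k <= 2 ^ n)%N -> open (O n k) /\ decr le (O n k),
  forall k, (k < 2 ^ n)%N ->
    [/\ closed (K n k), decr le (K n k), O n k `<=` K n k & K n k `<=` O n k.+1]
  & O n (2 ^ n) = W].
Proof.
have h0 : ihyp A W by split.
have [[oV0 dV0] [cD0 dD0] AV0 V0D0 D0W] := ipP h0.
elim: n => [|n [IHo IHk IHw]].
  split => //.
  - by case=> [|[|k]] //= _; rewrite /O /=.
  - by case=> [|k] //= _; rewrite /O /K /=.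
split.
- move=> j hj; rewrite O_S; case: (boolP (odd j)) => oj.
    have ej : j = (j./2).*2.+1 by rewrite -[in LHS](odd_double_half j) oj.
    have hk : (j./2 < 2 ^ n)%N.
      by move: hj; rewrite [in X in (X <= _)%N]ej expnS -mul2n; lia.
    have [cK dK OK KO] := IHk _ hk.
    have [oO dO] := IHo j./2.+1 hk.
    by have [h _ _ _ _] := ipP (And5 cK dK oO dO KO).
  apply: IHo.
  have ej : j = (j./2).*2 by rewrite -[in LHS](odd_double_half j) (negbTE oj).
  move: hj; rewrite [in X in (X <= _)%N]ej expnS -mul2n; lia.
- move=> j hj; rewrite !K_S !O_S; case: (boolP (odd j)) => oj.
    have ej : j = (j./2).*2.+1 by rewrite -[in LHS](odd_double_half j) oj.
    have hk : (j./2 < 2 ^ n)%N.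
      by move: hj; rewrite [in X in (X <= _)%N]ej expnS -mul2n; lia.
    have [cK dK OK KO] := IHk _ hk.
    have [oO dO] := IHo j./2.+1 hk.
    have [_ [cD dD] _ VD DO] := ipP (And5 cK dK oO dO KO).
    rewrite /= oj /= uphalf_half oj add1n.
    by split.
  have ej : j = (j./2).*2 by rewrite -[in LHS](odd_double_half j) (negbTE oj).
  have hk : (j./2 < 2 ^ n)%N.
    by move: hj; rewrite [in X in (X < _)%N]ej expnS -mul2n; lia.
  have [cK dK OK KO] := IHk _ hk.
  have [oO dO] := IHo j./2.+1 hk.
  have [_ _ KV _ _] := ipP (And5 cK dK oO dO KO).
  rewrite /= (negbTE oj) /= uphalf_half (negbTE oj) add0n.
  by split.
- by rewrite O_S expnS mul2n odd_double doubleK.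
Qed.

Lemma O_mono n k j : (k <= j <= 2 ^ n)%N -> O n k `<=` O n j.
Proof.
have [_ IHk _] := inv n.
elim: j => [|j IH] /andP[kj jn]; first by move: kj; rewrite leqn0 => /eqP ->.
move: kj; rewrite leq_eqVlt => /orP[/eqP -> //|kj].
have [_ _ OK KO] := IHk j jn.
move=> x Okx; apply: KO; apply: OK; apply: IH Okx.
by rewrite -ltnS kj /= ltnW.
Qed.

Lemma OK_mono n k j : (k <= j < 2 ^ n)%N -> O n k `<=` K n j.
Proof.
move=> /andP[kj jn]; have [_ IHk _] := inv n.
have [_ _ OK _] := IHk j jn.
move=> x Ox; apply: OK; apply: (@O_mono n k j) Ox.
by rewrite kj ltnW.
Qed.

Lemma O_lift m n k : O (m + n) (k * 2 ^ m) = O n k.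
Proof.
elim: m => [|m IH]; first by rewrite expn0 muln1.
by rewrite addSn O_S expnS mulnCA mul2n odd_double doubleK.
Qed.

Lemma K_lift m n k : K (m + n) (k * 2 ^ m) = K n k.
Proof.
elim: m => [|m IH]; first by rewrite expn0 muln1.
by rewrite addSn K_S expnS mulnCA mul2n odd_double doubleK.
Qed.

Lemma A_O n : A `<=` O n 0.
Proof.
rewrite O_n0 /O /=.
have h0 : ihyp A W by split.
by have [_ _ AV _ _] := ipP h0.
Qed.

Definition Sx (x : Y) : set R := [set r | (exists n k, [/\ (k <= 2 ^ n)%N,
   O n k x & r = k%:R / (2 ^ n)%:R]) \/ r = 1].

Definition gU (x : Y) : R := inf (Sx x).

Lemma Sx_ge0 x r : Sx x r -> 0 <= r.
Proof. by case=> [[n [k [_ _ ->]]]|->] //; rewrite divr_ge0. Qed.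

Lemma Sx_has x : has_lbound (Sx x).
Proof. by exists 0 => r /Sx_ge0. Qed.

Lemma Sx_n0 x : Sx x !=set0.
Proof. by exists 1; right. Qed.

Lemma gU_le n k x : (k <= 2 ^ n)%N -> O n k x -> gU x <= k%:R / (2 ^ n)%:R.
Proof. by move=> kn Ox; apply: ge_inf (Sx_has x) _ _; left; exists n, k. Qed.

Lemma gU_le1 x : gU x <= 1.
Proof. by apply: ge_inf (Sx_has x) _ _; right. Qed.

Lemma gU_ge0 x : 0 <= gU x.
Proof. by apply: lb_le_inf (Sx_n0 x) _ => r /Sx_ge0. Qed.

Lemma frac_lt (j a k b : nat) : (0 < a)%N -> (0 < b)%N ->
  j%:R / a%:R < k%:R / b%:R :> R -> (j * b < k * a)%N.
Proof.
move=> a0 b0; rewrite -(ltr_nat R) !natrM.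
have a0' : 0 < a%:R :> R by rewrite ltr0n.
have b0' : 0 < b%:R :> R by rewrite ltr0n.
rewrite ltr_pdivrMr // mulrAC ltr_pdivlMr //.
Qed.

Lemma gU_ge n k x : (k < 2 ^ n)%N -> ~ K n k x -> k%:R / (2 ^ n)%:R <= gU x.
Proof.
move=> kn nK; apply: lb_le_inf (Sx_n0 x) _ => r [[m [j [jm Ox ->]]]|->].
  rewrite leNgt; apply/negP => /frac_lt => /(_ (expn_gt0 _ _) (expn_gt0 _ _)) lt.
  apply: nK; rewrite -(K_lift m n k).
  have := @OK_mono (m + n) (j * 2 ^ n) (k * 2 ^ m).
  rewrite addnC O_lift => h; apply: h Ox.
  by rewrite (ltnW lt) /= expnD ltn_pmul2r // expn_gt0.
rewrite ler_pdivrMr ?ltr0n ?expn_gt0 // mul1r ler_nat; exact: ltnW.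
Qed.


Lemma O_decr n k : (k <= 2 ^ n)%N -> decr le (O n k).
Proof. by move=> kn; have [h _ _] := inv n; have [] := h k kn. Qed.

Lemma O_open n k : (k <= 2 ^ n)%N -> open (O n k).
Proof. by move=> kn; have [h _ _] := inv n; have [] := h k kn. Qed.

Lemma gU_iso x y : le x y -> gU x <= gU y.
Proof.
move=> lexy; apply: lb_le_inf (Sx_n0 y) _ => r Sr.
apply: ge_inf (Sx_has x) _ _.
case: Sr => [[n [k [kn Oy ->]]]|->]; last by right.
by left; exists n, k; split => //; exact: O_decr kn _ _ lexy Oy.
Qed.

Lemma gU_A a : A a -> gU a = 0.
Proof.
move=> Aa; apply/eqP; rewrite eq_le gU_ge0 andbT.
have := @gU_le 0 0 a isT (@A_O 0 a Aa); by rewrite mul0r.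
Qed.

Lemma gU_W x : ~ W x -> gU x = 1.
Proof.
move=> nW; apply/eqP; rewrite eq_le gU_le1 /=.
apply: lb_le_inf (Sx_n0 x) _ => r [[n [k [kn Ox ->]]]|->] //.
have [_ _ eW] := inv n.
by exfalso; apply: nW; rewrite -eW; apply: (@O_mono n k (2 ^ n)) Ox; rewrite kn leqnn.
Qed.

Lemma gU_cont : continuous gU.
Proof.
move=> x; apply/cvgrPdist_lt => e e0.
pose N := Num.truncn (3 / e); pose n := N.+1.
pose p : R := (2 ^ n)%:R.
have p0 : 0 < p by rewrite ltr0n expn_gt0.
have hn : 3 < e * p.
  have h1 : 3 / e < n%:R by rewrite /n truncnS_gt.
  have h2 : n%:R <= p by rewrite ler_nat ltnW // ltn_expl.
  rewrite mulrC -ltr_pdivrMr //; exact: lt_le_trans h1 h2.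
pose d : R := p^-1.
have d0 : 0 < d by rewrite invr_gt0.
have pd : p * d = 1 by rewrite mulfV // gt_eqF.
have up : \forall z \near x, gU z < gU x + d.
  have [r Sr rlt] := inf_adherent d0 (conj (Sx_n0 x) (Sx_has x)).
  case: Sr rlt => [[m [j [jm Ox ->]]]|->] rlt.
    have : nbhs x (O m j) by apply: open_nbhs_nbhs; split => //; exact: O_open.
    apply: filterS => z Oz; apply: le_lt_trans rlt; exact: gU_le.
  by apply: nearW => z; apply: le_lt_trans rlt; exact: gU_le1.
have lo : \forall z \near x, gU x - 3 * d < gU z.
  case: (ltP (gU x) (3 * d)) => [lt3|ge3].
    apply: nearW => z; apply: lt_le_trans (gU_ge0 z); lra.
  pose t := gU x * p.
  have t0 : 0 <= t by rewrite mulr_ge0 ?gU_ge0 // ltW.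
  have t3 : 3 <= t.
    by move: ge3; rewrite /t -ler_pdivrMr // /d => h; rewrite mulrC.
  have tp : t <= p by rewrite /t ler_piMl ?gU_le1 // ltW.
  pose m := Num.truncn t.
  have mt : m%:R <= t by rewrite truncn_le.
  have tm : t < m.+1%:R by rewrite truncnS_gt.
  have m3 : (3 <= m)%N by rewrite truncn_ge_nat.
  pose k := (m - 2)%N.
  have ek : (k.+1)%:R = m%:R - 1 :> R.
    by rewrite -natr1 natrB ?(leq_trans _ m3) //; lra.
  have ek' : k%:R = m%:R - 2 :> R by rewrite natrB ?(leq_trans _ m3).
  have kn : (k < 2 ^ n)%N.
    by rewrite -(ltr_nat R) -/p ek'; lra.
  have nK : ~ K n k x.
    move=> Kx; have [_ IHk _] := inv n; have [_ _ _ KO] := IHk k kn.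
    have := @gU_le n k.+1 x kn (KO x Kx).
    rewrite ler_pdivlMr -/p // -/t ek; lra.
  have : nbhs x (~` K n k).
    apply: open_nbhs_nbhs; split => //; apply: closed_openC.
    by have [_ IHk _] := inv n; have [] := IHk k kn.
  apply: filterS => z nKz; apply: lt_le_trans (@gU_ge n k z kn nKz).
  rewrite ltr_pdivlMr -/p // mulrBl -mulrA mulrC [d * p]mulrC pd mulr1 [p * gU x]mulrC -/t ek'.
  move: tm; rewrite -natr1; lra.
have h3 : 3 * d < e.
  by rewrite -(ltr_pM2r p0) -mulrA [d * p]mulrC pd mulr1.
apply: filterS (filterI up lo) => z [h1 h2].
rewrite ltr_norml; apply/andP; split; lra.
Qed.

Lemma urysohn_ord : exists g : Y -> R,
  [/\ continuous g, forall y, 0 <= g y <= 1, isotone le (fun a b => a <= b) g,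
      forall a, A a -> g a = 0 & forall x, ~ W x -> g x = 1].
Proof.
exists gU; split.
- exact: gU_cont.
- by move=> y; rewrite gU_ge0 gU_le1.
- exact: gU_iso.
- exact: gU_A.
- exact: gU_W.
Qed.

End Urysohn.

Lemma ord_sep (R : realType) (Y : topologicalType) (le : Y -> Y -> Prop) :
  compact [set: Y] -> hausdorff_space Y -> T2_ordered le ->
  forall y y', ~ le y y' -> exists g : Y -> R, cont_iso01 le g /\ g y' < g y.
Proof.
move=> cY hY oY y y' nle.
have [le_refl le_trans _ _] := oY.
pose A := [set x | exists2 k, [set y'] k & le x k].
pose W := ~` [set x | exists2 k, [set y] k & le k x].
have c1 : forall z : Y, closed [set z].
  by move=> z; apply: accessible_closed_set1; exact: hausdorff_accessible.
have cA : closed A by apply: (@down_closed Y le cY oY); exact: c1.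
have oW : open W.
  by apply: closed_openC; apply: (@up_closed Y le cY oY); exact: c1.
have dA : decr le A by move=> a b lab [k -> lbk]; exists y' => //; exact: le_trans lab lbk.
have dW : decr le W.
  by move=> a b lab Wb [k -> lka]; apply: Wb; exists y => //; exact: le_trans lka lab.
have AW : A `<=` W by move=> a [k -> lak] [k' -> lka]; apply: nle; exact: le_trans lka lak.
have [g [gc g01 giso gA gW]] := @urysohn_ord R Y le cY hY oY A W cA dA oW dW AW.
exists g; split; first by split.
rewrite gA; last by exists y'.
by rewrite gW ?ltr01 // => -[]; exists y.
Qed.


Section Quot.
Variables (T : topologicalType) (Pp : preorder T).

Lemma qeq (x y : T) : qproj Pp x = qproj Pp y <-> (Pp x y /\ Pp y x).
Proof.
split.
  move=> h; have : peqv Pp x y.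
    by apply/(@eqquotP _ _ {eq_quot (peqv Pp)}%qT); exact: h.
  by move/asboolP.
move=> h; apply/(@eqquotP _ _ {eq_quot (peqv Pp)}%qT); exact/asboolP.
Qed.

Lemma qrepr (x : T) : Pp (repr (qproj Pp x)) x /\ Pp x (repr (qproj Pp x)).
Proof. by apply/qeq; rewrite /qproj reprK. Qed.

Lemma qprojK (q : pquot Pp) : qproj Pp (repr q) = q.
Proof. exact: reprK. Qed.

Lemma qle_proj (x y : T) : qle (qproj Pp x) (qproj Pp y) <-> Pp x y.
Proof.
have [h1 h2] := qrepr x; have [h3 h4] := qrepr y.
rewrite /qle; split => h.
  exact: ple_trans (ple_trans h2 h) h3.
exact: ple_trans (ple_trans h1 h) h4.
Qed.

Lemma qle_antisym (a b : pquot Pp) : qle a b -> qle b a -> a = b.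
Proof. by move=> h1 h2; rewrite -(qprojK a) -(qprojK b); apply/qeq. Qed.

Lemma qproj_cont : continuous (qproj Pp).
Proof. exact: pi_continuous. Qed.

End Quot.
Arguments qeq {T Pp x y}.
Arguments qrepr {T Pp} x.
Arguments qprojK {T Pp} q.
Arguments qle_proj {T Pp x y}.
Arguments qle_antisym {T Pp a b}.
Arguments qproj_cont {T Pp}.

Lemma qlift_cont (T : topologicalType) (Pp : preorder T) (Z : topologicalType)
  (g : T -> Z) : continuous g -> (forall x y, Pp x y -> Pp y x -> g x = g y) ->
  continuous (fun q : pquot Pp => g (repr q)).
Proof.
move=> gc gr; apply/quotient_continuous.
have -> : (fun q : pquot Pp => g (repr q)) \o \pi_(pquot Pp)%qT = g.
  apply: funext => x /=; have [h1 h2] := @qrepr _ Pp x; exact: (gr _ _ h1 h2).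
exact: gc.
Qed.

Lemma sep_hausdorff (R : realType) (Z : topologicalType) (I : Type)
  (v : I -> Z -> R) : (forall i, continuous (v i)) ->
  (forall z z', (forall i, v i z = v i z') -> z = z') -> hausdorff_space Z.
Proof.
move=> vc sep p q cl; apply: (sep p q) => i; apply: Rhausdorff.
move=> A B HA HB.
have [z [Az Bz]] := cl _ _ (vc i p A HA) (vc i q B HB).
by exists (v i z).
Qed.

Lemma near_lt (R : realType) (Y Z : topologicalType) (u : Y -> R) (v : Z -> R) y z :
  continuous u -> continuous v -> u y < v z ->
  \forall z' \near z & y' \near y, u y' < v z'.
Proof.
move=> uc vc lt; pose m := (u y + v z) / 2.
have hv : nbhs z (v @^-1` [set x | m < x]).
  apply: nbhs_pre => //; rewrite /= /m; lra.
have hu : nbhs y (u @^-1` [set x | x < m]).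
  apply: nbhs_pre => //; rewrite /= /m; lra.
exists (v @^-1` [set x | m < x], u @^-1` [set x | x < m]) => //=.
by case=> z' y' /= [h1 h2]; lra.
Qed.
Arguments near_lt {R Y Z u v y z}.

Section Main.
Variables (R : realType) (E : topologicalType) (P : preorder E).
Hypothesis crord : completely_regularly_ordered R (@qle E P).

Lemma comp_qproj_iso (g : pquot P -> R) : cont_iso01 (@qle E P) g ->
  cont_iso01 P (g \o qproj P).
Proof.
move=> [gc [g01 giso]]; split; last split.
- by move=> z; apply: continuous_comp; [exact: qproj_cont | exact: gc].
- by move=> z; exact: g01.
- by move=> a c Pac; apply: giso; apply/qle_proj.
Qed.

Lemma part1 x y : P x y <-> (forall f : E -> R, cont_iso01 P f -> f x <= f y).
Proof.
split; first by move=> Pxy f [_ [_ iso]]; exact: iso.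
move=> H; apply/qle_proj; apply/(crord.2 _ _) => g hg.
exact: (H _ (comp_qproj_iso _ hg)).
Qed.

Section SC.
Variables (bE : topologicalType) (b : E -> bE).
Hypothesis sc : stone_cech R b.

Let Pb := beta_pre R P b.

Definition good (g : bE -> R) := continuous g /\ cont_iso01 P (g \o b).

Lemma Pb_good x y : Pb x y <-> forall g, good g -> g x <= g y.
Proof.
split.
  by move=> h g [gc gi]; exact: (h _ gi g gc erefl).
by move=> h f fi g gc gb; apply: h; split => //; rewrite gb.
Qed.

Lemma ext f : cont_iso01 P f -> exists g, good g /\ g \o b = f.
Proof.
move=> fi; have [_ _ _ _ ex] := sc.
have [fc [f01 _]] := fi.
have [g [gc gb]] := ex f fc f01.
by exists g; split => //; split => //; rewrite gb.
Qed.

Lemma Pb_b x y : Pb (b x) (b y) <-> P x y.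
Proof.
split => h.
  apply/part1 => f fi; have [g [gg gb]] := ext _ fi.
  have := (Pb_good (b x) (b y)).1 h g gg.
  by rewrite -gb.
apply/Pb_good => g [_ [_ [_ iso]]]; exact: iso x y h.
Qed.

Definition hQ (g : bE -> R) (q : pquot Pb) := g (repr q).

Lemma good_resp g : good g -> forall x y, Pb x y -> Pb y x -> g x = g y.
Proof.
move=> gg x y h1 h2; apply/eqP; rewrite eq_le.
by rewrite ((Pb_good _ _).1 h1 g gg) ((Pb_good _ _).1 h2 g gg).
Qed.

Lemma hQ_cont g : good g -> continuous (hQ g).
Proof. move=> gg; apply: qlift_cont; [by case: gg | exact: good_resp]. Qed.

Lemma hQ_proj g z : good g -> hQ g (qproj Pb z) = g z.
Proof.
move=> gg; have [h1 h2] := @qrepr _ Pb z.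
exact: (good_resp _ gg _ _ h1 h2).
Qed.

Lemma qleQ (a c : pquot Pb) : qle a c <-> forall g, good g -> hQ g a <= hQ g c.
Proof. exact: Pb_good. Qed.

Lemma sepQ (a c : pquot Pb) : (forall g, good g -> hQ g a = hQ g c) -> a = c.
Proof.
move=> h; apply: qle_antisym; apply/qleQ => g gg; rewrite h //.
Qed.

Definition phi (q : pquot P) : pquot Pb := qproj Pb (b (repr q)).

Lemma phi_proj x : phi (qproj P x) = qproj Pb (b x).
Proof.
have [h1 h2] := @qrepr _ P x.
by apply/qeq; split; apply/Pb_b.
Qed.

Lemma hQ_phi g q : good g -> hQ g (phi q) = g (b (repr q)).
Proof. by move=> gg; rewrite /phi hQ_proj. Qed.


Lemma b_cont : continuous b.
Proof. by have [[]] := sc. Qed.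

Lemma phi_comp : phi \o qproj P = qproj Pb \o b.
Proof. by apply: funext => x; exact: phi_proj. Qed.

Lemma phi_cont : continuous phi.
Proof.
apply/quotient_continuous; rewrite (_ : phi \o _ = qproj Pb \o b); last first.
  exact: phi_comp.
by move=> x; apply: continuous_comp; [exact: b_cont | exact: qproj_cont].
Qed.

Lemma phi_iso : isotone (@qle E P) (@qle bE Pb) phi.
Proof. by move=> a c h; rewrite /phi; apply/qle_proj; apply/Pb_b. Qed.

Lemma phi_refl a c : qle (phi a) (phi c) -> qle a c.
Proof. by rewrite /phi => /qle_proj/Pb_b. Qed.

Lemma phi_inj : injective phi.
Proof.
move=> a c e; apply: qle_antisym; apply: phi_refl; rewrite e; exact: ple_refl.
Qed.

Lemma phi_dense : dense (range phi).
Proof.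
move=> O [z Oz] oO.
have [_ db _ _ _] := sc.
have oO' : open (\pi_(pquot Pb)%qT @^-1` O) by exact: oO.
have ne : (\pi_(pquot Pb)%qT @^-1` O) !=set0.
  by exists (repr z); rewrite /= reprK.
have [w [Ow [x _ bx]]] := db _ ne oO'.
exists (phi (qproj P x)); split; last by exists (qproj P x).
by rewrite phi_proj /qproj bx.
Qed.

Lemma Q_compact : compact [set: pquot Pb].
Proof.
have [_ _ cb _ _] := sc.
have -> : [set: pquot Pb] = \pi_(pquot Pb)%qT @` [set: bE].
  by rewrite predeqE => z; split => // _; exists (repr z) => //; rewrite reprK.
apply: continuous_compact => //.
by apply: continuous_subspaceT; exact: pi_continuous.
Qed.

Lemma Q_hausdorff : hausdorff_space (pquot Pb).
Proof.
have := @sep_hausdorff R (pquot Pb) {g | good g} (fun i => hQ (sval i)).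
apply.
  by move=> [g gg]; exact: hQ_cont.
by move=> a c h; apply: sepQ => g gg; exact: (h (exist _ g gg)).
Qed.

Lemma Q_T2 : T2_ordered (@qle bE Pb).
Proof.
split.
- by move=> a; exact: ple_refl.
- by move=> a c d; exact: ple_trans.
- by move=> a c; exact: qle_antisym.
rewrite /T2_preordered -[X in closed X]setCK; apply: open_closedC.
rewrite openE => -[a c] /= nle.
have [g [gg lt]] : exists g, good g /\ hQ g c < hQ g a.
  apply: contrapT => H; apply: nle; apply/qleQ => g gg; rewrite leNgt.
  by apply/negP => lt; apply: H; exists g.
have := near_lt (hQ_cont _ gg) (hQ_cont _ gg) lt.
apply: filterS => -[a' c'] /= lt' le'.
by move: lt'; rewrite ltNge ((qleQ _ _).1 le' g gg).
Qed.


Lemma phi_emb : embedding_onto_image phi.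
Proof.
move=> U oU.
pose V := [set z : pquot Pb | exists O, nbhs z O /\ forall q, O (phi q) -> U q].
exists V; split.
  rewrite openE => z [O [nO hO]].
  move: nO; rewrite nbhsE => -[O' [oO' O'z] O'O].
  apply: filterS (open_nbhs_nbhs (conj oO' O'z)) => z' O'z'.
  exists O'; split; first exact: open_nbhs_nbhs.
  by move=> q /O'O; exact: hO.
rewrite predeqE => z; split.
  case=> q Uq <-; split; first by exists q.
  have [n [f [W [hf sub]]]] := crord.1 U q oU Uq.
  have : forall i, exists G, good G /\ G \o b = f i \o qproj P.
    by move=> i; have [fi oW Wq] := hf i; exact: ext _ (comp_qproj_iso _ fi).
  move=> /choice [G HG].
  have e : forall i q', hQ (G i) (phi q') = f i q'.
    move=> i q'; rewrite (hQ_phi _ _ (HG i).1).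
    by have := congr1 (fun h => h (repr q')) (HG i).2 => /= ->; rewrite qprojK.
  exists [set z | forall i, W i (hQ (G i) z)]; split.
    apply: (@filter_forall _ _ (fun i z => W i (hQ (G i) z)) (nbhs (phi q)) _) => i.
    have [fi oW Wq] := hf i.
    by apply: nbhs_pre (hQ_cont _ (HG i).1) oW _; rewrite e.
  move=> q' hq'; apply: sub => i _ /=.
  by have := hq' i; rewrite e.
case=> -[q _ <-] [O [nO hO]]; exists q => //; apply: hO; exact: nbhs_singleton nO.
Qed.

Lemma nach_equiv (nX : topologicalType) (leN : nX -> nX -> Prop)
  (n : pquot P -> nX) :
  nachbin_compactification R (@qle E P) leN n ->
  compactification_equiv (@qle bE Pb) leN phi n.
Proof.
move=> [[[nc niso ninj nemb nrefl] nd ncpt nhaus nT2] next].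
have [lrefl ltrans lanti _] := nT2.
split.
- have : forall i : {g | good g}, exists u : nX -> R,
      cont_iso01 leN u /\ u \o n = (fun q => sval i (b (repr q))).
    move=> [g [gc gi]] /=; apply: next.
    have [_ [g01 iso]] := gi.
    split; [|split].
    + apply: (@qlift_cont _ P _ (g \o b)).
        by move=> x; apply: continuous_comp; [exact: b_cont | exact: gc].
      move=> x y h1 h2; apply/eqP; rewrite eq_le.
      by rewrite (iso _ _ h1) (iso _ _ h2).
    + by move=> q; exact: g01.
    + by move=> a c h; exact: iso _ _ h.
  move=> /choice [u Hu].
  have sepQ' : forall a c : pquot Pb,
      (forall i : {g | good g}, hQ (sval i) a = hQ (sval i) c) -> a = c.
    by move=> a c h; apply: sepQ => g gg; exact: (h (exist _ g gg)).
  have ucd : forall (i : {g | good g}) w, u i (n w) = hQ (sval i) (phi w).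
    move=> i w; rewrite (hQ_phi _ _ (svalP i)).
    by have := congr1 (fun h => h w) (Hu i).2.
  have [C [Cc Cv Ccd]] := @build_map R (pquot P) nX (pquot Pb) {g | good g}
    u (fun i => hQ (sval i)) n phi Q_compact (fun i => (Hu i).1.1)
    (fun i => hQ_cont _ (svalP i)) sepQ' nd ucd.
  exists C; split => //.
    move=> y y' lyy; apply/qleQ => g gg.
    rewrite (Cv (exist _ g gg)) (Cv (exist _ g gg)).
    by have [_ [_ iso]] := (Hu (exist _ g gg)).1; exact: iso.
  by apply: funext => w; exact: Ccd.
- have : forall i : {k : nX -> R | cont_iso01 leN k}, exists G,
      good G /\ G \o b = sval i \o n \o qproj P.
    move=> [k [kc [k01 kiso]]] /=; apply: ext; apply: comp_qproj_iso.
    split; [|split].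
    + by move=> x; apply: continuous_comp; [exact: nc | exact: kc].
    + by move=> q; exact: k01.
    + by move=> a c h; apply: kiso; exact: niso.
  move=> /choice [G HG].
  have nle : forall z z', (forall i : {k : nX -> R | cont_iso01 leN k},
      sval i z <= sval i z') -> leN z z'.
    move=> z z' h; apply: contrapT => nl.
    have [k [ki lt]] := @ord_sep R nX leN ncpt nhaus nT2 _ _ nl.
    by move: (h (exist _ k ki)) => /=; rewrite leNgt lt.
  have sep' : forall z z', (forall i : {k : nX -> R | cont_iso01 leN k},
      sval i z = sval i z') -> z = z'.
    by move=> z z' h; apply: lanti; apply: nle => i; rewrite h.
  have ucd : forall (i : {k : nX -> R | cont_iso01 leN k}) w,
      hQ (G i) (phi w) = sval i (n w).
    move=> i w; rewrite (hQ_phi _ _ (HG i).1).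
    by have := congr1 (fun h => h (repr w)) (HG i).2 => /= ->; rewrite qprojK.
  have [C [Cc Cv Ccd]] := @build_map R (pquot P) (pquot Pb) nX
    {k : nX -> R | cont_iso01 leN k} (fun i => hQ (G i)) (fun i => sval i)
    phi n ncpt (fun i => hQ_cont _ (HG i).1) (fun i => (svalP i).1) sep'
    phi_dense ucd.
  exists C; split => //.
    move=> a a' h; apply: nle => i; rewrite !Cv.
    exact: ((qleQ _ _).1 h (G i) (HG i).1).
  by apply: funext => w; exact: Ccd.
Qed.

End SC.
End Main.


Theorem mainTheorem9 (R : realType) (E : topologicalType) (P : preorder E) :
  tychonoff_space R E ->
  T2_preordered P ->
  completely_regularly_ordered R (@qle E P) ->
  (* the preorder is represented by the continuous isotone functions *)
  (forall x y : E, P x y <-> (forall f : E -> R, cont_iso01 P f -> f x <= f y)) /\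
  (forall (bE : topologicalType) (b : E -> bE), stone_cech R b ->
     let Pb := beta_pre R P b in
     let phi : pquot P -> pquot Pb := fun q => qproj Pb (b (repr q)) in
     [/\ (* phi is well defined *)
         (forall x y : E, qproj P x = qproj P y -> qproj Pb (b x) = qproj Pb (b y)),
         (* phi is a T2-order compactification of E/~ *)
         T2_order_compactification (@qle E P) (@qle bE Pb) phi,
         (* equivalent to the Nachbin compactification *)
         (forall (nX : topologicalType) (leN : nX -> nX -> Prop)
                 (n : pquot P -> nX),
            nachbin_compactification R (@qle E P) leN n ->
            compactification_equiv (@qle bE Pb) leN phi n) &
         (* phi o pi = Pi o beta *)
         phi \o qproj P = qproj Pb \o b]).
Proof.
move=> _ _ crord; split; first exact: (@part1 R E P crord).
move=> bE b sc Pb phi0.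
have ephi : phi0 = @phi R E P bE b by [].
rewrite ephi; split.
- move=> x y /qeq [h1 h2]; apply/qeq.
  by split; apply/(@Pb_b R E P crord bE b sc).
- split.
  + split.
    * by apply: (@phi_cont R E P crord bE b sc).
    * by apply: (@phi_iso R E P crord bE b sc).
    * by apply: (@phi_inj R E P crord bE b sc).
    * by apply: (@phi_emb R E P crord bE b sc).
    * by move=> a c; apply: (@phi_refl R E P crord bE b sc).
  + by apply: (@phi_dense R E P crord bE b sc).
  + by apply: (@Q_compact R E P bE b sc).
  + by apply: (@Q_hausdorff R E P bE b).
  + by apply: (@Q_T2 R E P bE b).
- by move=> nX leN n nh; apply: (@nach_equiv R E P crord bE b sc).
- by apply: (@phi_comp R E P crord bE b sc).
Qed.
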